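(* Let $p\in\mathcal{P}^d$ be perfect. Then the quadratic part $\pi_\Phi p$ of $p$ is an edge form of an L-type domain, i.e. $\pi_\Phi p\in\Phi^d$ and the L-type domain containing it is one-dimensional.
   Context: $\mathcal{P}^d$ is the set of real polynomials $f$ of degree $2$ in $x_1,\dots,x_d$ with $f(\mathbf{z})\ge0$ for all $\mathbf{z}\in\mathbb{Z}^d$; $\mathcal{V}(f)=\{\mathbf{z}\in\mathbb{Z}^d: f(\mathbf{z})=0\}$. $p\in\mathcal{P}^d$ is perfect if $\mathcal{V}(p)\neq\emptyset$ and every real polynomial of degree at most $2$ vanishing on $\mathcal{V}(p)$ is a scalar multiple of $p$. $\pi_\Phi p$ denotes the homogeneous degree-2 part of $p$. $\Phi^d$ is the cone of quadratic forms on $\mathbb{R}^d$ that are positive definite or positive semidefinite with kernel spanned by integer vectors. For $\varphi\in\Phi^d$, the Delaunay tiling $\mathrm{Del}(\varphi)$ is the tiling of $\mathbb{R}^d$ by the Delaunay polyhedra $\operatorname{conv}\mathcal{V}(f)$, $f\in\mathcal{P}^d$ with $\pi_\Phi f=\varphi$ and $\mathcal{V}(f)$ not contained in a hyperplane (for positive definite $\varphi$ these are the polytopes inscribed in ellipsoids $\varphi[\mathbf{x}-\mathbf{c}]\le R^2$ with no interior integer points; for semidefinite $\varphi$ they are cylinders over such polytopes along $\ker\varphi$). The L-type domain of a Delaunay tiling $\mathcal{D}$ is $\{\varphi\in\Phi^d:\mathrm{Del}(\varphi)=\mathcal{D}\}$; forms lying in one-dimensional L-type domains are called edge forms. *)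

(* Defs.v *)
From HB Require Import structures.
From mathcomp Require Import all_boot all_order all_algebra.
From mathcomp Require Import reals.
Set Implicit Arguments. Unset Strict Implicit. Unset Printing Implicit Defensive.
Import Order.TTheory GRing.Theory Num.Theory.
Local Open Scope ring_scope.

Section Defs.
Variables (R : realType) (d : nat).

(* A real polynomial of degree at most 2 in x_1..x_d, written
   f(x) = x A x^T + 2 b . x + c  with A symmetric (points are row vectors). *)
Record quad := Quad { qA : 'M[R]_d; qb : 'rV[R]_d; qc : R }.

Definition qeval (f : quad) (x : 'rV[R]_d) : R :=
  (x *m qA f *m x^T) 0 0 + 2 * (x *m (qb f)^T) 0 0 + qc f.

(* f is (a canonical coefficient representation of) a polynomial of degree <= 2 *)
Definition is_poly2 (f : quad) : Prop := (qA f)^T = qA f.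
Definition is_deg2 (f : quad) : Prop := is_poly2 f /\ qA f != 0.

Definition qscale (l : R) (f : quad) : quad :=
  Quad (l *: qA f) (l *: qb f) (l * qc f).

Definition Zpt (x : 'rV[R]_d) : Prop := forall j, x 0 j \is a Num.int.

Definition inP (f : quad) : Prop :=
  is_deg2 f /\ forall x, Zpt x -> 0 <= qeval f x.

Definition Vset (f : quad) (x : 'rV[R]_d) : Prop := Zpt x /\ qeval f x = 0.

Definition perfect (p : quad) : Prop :=
  inP p /\ (exists x, Vset p x) /\
  forall g, is_poly2 g -> (forall x, Vset p x -> qeval g x = 0) ->
    exists l : R, g = qscale l p.

Definition piPhi (p : quad) : 'M[R]_d := qA p.

Definition qform (phi : 'M[R]_d) (x : 'rV[R]_d) : R := (x *m phi *m x^T) 0 0.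

(* Phi^d: positive semidefinite forms whose kernel is spanned by integer vectors
   (positive definite forms included: empty spanning family). *)
Definition inPhi (phi : 'M[R]_d) : Prop :=
  phi^T = phi /\ (forall x, 0 <= qform phi x) /\
  exists (n : nat) (v : 'I_n -> 'rV[R]_d),
    (forall i, Zpt (v i) /\ v i *m phi = 0) /\
    forall x, x *m phi = 0 -> exists c : 'I_n -> R, x = \sum_(i < n) c i *: v i.

Definition in_hyperplane (S : 'rV[R]_d -> Prop) : Prop :=
  exists (a : 'rV[R]_d) (beta : R), a != 0 /\
    forall x, S x -> (x *m a^T) 0 0 = beta.

Definition conv (S : 'rV[R]_d -> Prop) (x : 'rV[R]_d) : Prop :=
  exists (n : nat) (pt : 'I_n -> 'rV[R]_d) (w : 'I_n -> R),
    (forall i, S (pt i)) /\ (forall i, 0 <= w i) /\ \sum_(i < n) w i = 1 /\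
    x = \sum_(i < n) w i *: pt i.

Definition Del (phi : 'M[R]_d) (P : 'rV[R]_d -> Prop) : Prop :=
  exists f, inP f /\ piPhi f = phi /\ ~ in_hyperplane (Vset f) /\
    forall x, P x <-> conv (Vset f) x.

Definition same_tiling (D1 D2 : ('rV[R]_d -> Prop) -> Prop) : Prop :=
  forall P, D1 P <-> D2 P.

Definition ltype_domain (D : ('rV[R]_d -> Prop) -> Prop) (psi : 'M[R]_d) : Prop :=
  inPhi psi /\ same_tiling (Del psi) D.

Definition one_dimensional (S : 'M[R]_d -> Prop) : Prop :=
  exists psi0, psi0 != 0 /\ S psi0 /\ forall psi, S psi -> exists l : R, psi = l *: psi0.

Definition edge_form (phi : 'M[R]_d) : Prop :=
  inPhi phi /\ one_dimensional (ltype_domain (Del phi)).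

End Defs.

(* Main.v *)
Require Import Defs.
From HB Require Import structures.
From mathcomp Require Import all_boot all_order all_algebra.
From mathcomp Require Import reals.
From Stdlib Require Import Classical.
From mathcomp Require Import ring lra.
Set Implicit Arguments. Unset Strict Implicit. Unset Printing Implicit Defensive.
Import Order.TTheory GRing.Theory Num.Theory.
Local Open Scope ring_scope.

Lemma classical_max (Q : nat -> Prop) (B : nat) :
  Q 0%N -> (forall k, Q k -> (k <= B)%N) ->
  exists k, Q k /\ forall k', Q k' -> (k' <= k)%N.
Proof.
move=> Q0 QB; apply: NNPP => H.
have step : forall k, Q k -> exists k', Q k' /\ (k < k')%N.
  move=> k Qk; apply: NNPP => H2; apply: H; exists k; split => // k' Qk'.
  rewrite leqNgt; apply/negP => lt; apply: H2; by exists k'.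
have big : forall n, exists k, Q k /\ (n <= k)%N.
  elim=> [|n [k [Qk le]]]; first by exists 0%N.
  have [k' [Qk' lt]] := step k Qk; exists k'; split => //.
  exact: leq_ltn_trans le lt.
have [k [Qk le]] := big B.+1.
by have := QB k Qk; rewrite leqNgt (leq_trans (ltnSn B) le).
Qed.

Section Rat.
Variable R : realType.

Lemma ratsol (M : nat) (P : 'cV[R]_M) : P != 0 ->
  exists w : 'cV[rat]_M, w != 0 /\
    forall a : 'rV[rat]_M, map_mx ratr a *m P = 0 -> a *m w = 0.
Proof.
move=> P0.
pose Q k := exists X : 'M[rat]_M, map_mx ratr X *m P = 0 /\ \rank X = k.
have [r [[X [XP rX]] rmax]] : exists k, Q k /\ forall k', Q k' -> (k' <= k)%N.
  apply: (@classical_max Q M).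
    by exists 0; rewrite map_mx0 mul0mx mxrank0.
  by move=> k [X [_ <-]]; exact: rank_leq_col.
have rlt : (r < M)%N.
  rewrite ltn_neqAle -{2}rX rank_leq_col andbT; apply/negP => /eqP rM.
  have : X \in unitmx by rewrite -row_full_unit /row_full rX rM.
  rewrite -(map_unitmx (@ratr R)) => U.
  move/negP: P0; apply; apply/eqP.
  by rewrite -(mul1mx P) -(mulVmx U) -mulmxA XP mulmx0.
have cz : cokermx X != 0.
  by rewrite -mxrank_eq0 mxrank_coker rX -lt0n subn_gt0.
have [j wj] : exists j, col j (cokermx X) != 0.
  apply: NNPP => H; move/negP: cz; apply; apply/eqP/matrixP => i j.
  have : col j (cokermx X) = 0.
    by apply/eqP; apply: NNPP => H2; apply: H; exists j; apply/negP.
  by move/matrixP/(_ i 0); rewrite !mxE.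
exists (col j (cokermx X)); split => // a aP.
pose Y := (X + a)%MS.
have YP : map_mx ratr Y *m P = 0.
  have /sub_addsmxP [[u1 u2] /= ->] : (Y <= X + a)%MS by exact: submx_refl.
  by rewrite map_mxD !map_mxM mulmxDl -!mulmxA XP aP !mulmx0 addr0.
have le := rmax _ (ex_intro _ Y (conj YP erefl)).
have XY : (X <= Y)%MS by exact: addsmxSl.
have := mxrank_leqif_sup XY; rewrite rX => /leqifP.
case: ifP => [YX _ | _]; last by rewrite ltnNge le.
have /submxP [u ->] : (a <= X)%MS.
  by apply: submx_trans YX; exact: addsmxSr.
by rewrite colE mulmxA -(mulmxA u) mulmx_coker mulmx0 mul0mx.
Qed.

Lemma sumE (I : finType) (F : I -> R) : \sum_k F k = \sum_(i < #|I|) F (enum_val i).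
Proof.
rewrite (@reindex _ _ _ _ _ (@enum_val I (mem predT))) //.
exact: onW_bij (enum_val_bij I).
Qed.
Lemma sumEq (I : finType) (F : I -> rat) : \sum_k F k = \sum_(i < #|I|) F (enum_val i).
Proof.
rewrite (@reindex _ _ _ _ _ (@enum_val I (mem predT))) //.
exact: onW_bij (enum_val_bij I).
Qed.

Lemma ratsolF (I : finType) (P : I -> R) : (exists k, P k != 0) ->
  exists w : I -> rat, (exists k, w k != 0) /\
    forall a : I -> rat, \sum_k ratr (a k) * P k = 0 -> \sum_k a k * w k = 0.
Proof.
move=> [k Pk].
pose Pc : 'cV[R]_#|I| := \col_i P (enum_val i).
have Pc0 : Pc != 0.
  apply/negP => /eqP/matrixP/(_ (enum_rank k) 0); rewrite !mxE enum_rankK => E.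
  by move/negP: Pk; apply; rewrite E.
have [w' [w'0 hw']] := ratsol Pc0.
exists (fun k => w' (enum_rank k) 0); split.
  apply: NNPP => H; move/negP: w'0; apply; apply/eqP/matrixP => i j.
  rewrite (ord1 j) mxE; apply: NNPP => H2; apply: H; exists (enum_val i).
  by rewrite enum_valK; apply/negP => /eqP.
move=> a ha.
pose av : 'rV[rat]_#|I| := \row_i a (enum_val i).
have : map_mx ratr av *m Pc = 0.
  apply/matrixP => i j; rewrite (ord1 i) (ord1 j) !mxE -[RHS]ha [RHS]sumE.
  by apply: eq_bigr => l _; rewrite !mxE.
move/hw'/matrixP/(_ 0 0); rewrite !mxE => E.
rewrite sumEq -[RHS]E.
by apply: eq_bigr => l _; rewrite !mxE enum_valK.
Qed.
End Rat.

Section Q.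
Variables (R : realType) (d : nat).

Definition bil (A : 'M[R]_d) (x y : 'rV[R]_d) : R := (x *m A *m y^T) 0 0.

Lemma bilDl A x y z : bil A (x + y) z = bil A x z + bil A y z.
Proof. by rewrite /bil !mulmxDl mxE. Qed.
Lemma bilDr A x y z : bil A z (x + y) = bil A z x + bil A z y.
Proof. by rewrite /bil linearD /= mulmxDr mxE. Qed.
Lemma bilZl A a x z : bil A (a *: x) z = a * bil A x z.
Proof. by rewrite /bil -!scalemxAl mxE. Qed.
Lemma bilZr A a x z : bil A z (a *: x) = a * bil A z x.
Proof. by rewrite /bil linearZ /= -scalemxAr mxE. Qed.
Lemma bilNl A x z : bil A (- x) z = - bil A x z.
Proof. by rewrite -scaleN1r bilZl mulN1r. Qed.
Lemma bilNr A x z : bil A z (- x) = - bil A z x.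
Proof. by rewrite -scaleN1r bilZr mulN1r. Qed.
Lemma bil_suml A n (w : 'I_n -> R) (pt : 'I_n -> 'rV[R]_d) y :
  bil A (\sum_i w i *: pt i) y = \sum_i w i * bil A (pt i) y.
Proof.
elim/big_ind2: _ => //; first by rewrite /bil !mul0mx mxE.
  by move=> ? ? ? ? <- <-; rewrite bilDl.
by move=> i _; rewrite bilZl.
Qed.
Lemma bil_sumr A n (w : 'I_n -> R) (pt : 'I_n -> 'rV[R]_d) y :
  bil A y (\sum_i w i *: pt i) = \sum_i w i * bil A y (pt i).
Proof.
elim/big_ind2: _ => //; first by rewrite /bil linear0 mulmx0 mxE.
  by move=> ? ? ? ? <- <-; rewrite bilDr.
by move=> i _; rewrite bilZr.
Qed.

Definition lin (b x : 'rV[R]_d) : R := (x *m b^T) 0 0.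
Lemma lin_sum b n (w : 'I_n -> R) (pt : 'I_n -> 'rV[R]_d) :
  lin b (\sum_i w i *: pt i) = \sum_i w i * lin b (pt i).
Proof.
elim/big_ind2: _ => //; first by rewrite /lin mul0mx mxE.
  by move=> ? ? ? ? <- <-; rewrite /lin mulmxDl mxE.
by move=> i _; rewrite /lin -scalemxAl mxE.
Qed.

Lemma qevalE (f : quad R d) x : qeval f x = bil (qA f) x x + 2 * lin (qb f) x + qc f.
Proof. by []. Qed.

Lemma jensen (f : quad R d) n (pt : 'I_n -> 'rV[R]_d) (w : 'I_n -> R) :
  (forall x, 0 <= qform (qA f) x) -> (forall i, 0 <= w i) -> \sum_i w i = 1 ->
  qeval f (\sum_i w i *: pt i) <= \sum_i w i * qeval f (pt i).
Proof.
move=> psd w0 w1; set xb := \sum_i w i *: pt i.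
have H : 0 <= \sum_i w i * bil (qA f) (pt i - xb) (pt i - xb).
  by apply: sumr_ge0 => i _; apply: mulr_ge0 => //; exact: psd.
have E : \sum_i w i * bil (qA f) (pt i - xb) (pt i - xb) =
   \sum_i w i * bil (qA f) (pt i) (pt i) - bil (qA f) xb xb.
  under eq_bigr => i _ do rewrite bilDl !bilDr bilNl !bilNr.
  rewrite /=.
  have -> : forall F1 F2 F3 (c : R), \sum_i w i * (F1 i - F2 i + (- F3 i + c)) =
     \sum_i w i * F1 i - \sum_i w i * F2 i
     - \sum_i w i * F3 i + (\sum_i w i) * c.
    move=> F1 F2 F3 c.
    rewrite mulr_suml -!sumrB -big_split /=; apply: eq_bigr => i _; ring.
  rewrite bilNl opprK -bil_suml -bil_sumr w1 mul1r -/xb; ring.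
rewrite E subr_ge0 in H.
rewrite qevalE.
have -> : \sum_i w i * qeval f (pt i) =
   \sum_i w i * bil (qA f) (pt i) (pt i) + 2 * lin (qb f) xb + qc f.
  have -> : qc f = \sum_i w i * qc f by rewrite -mulr_suml w1 mul1r.
  rewrite lin_sum mulr_sumr -!big_split /=.
  by apply: eq_bigr => i _; rewrite qevalE; ring.
by rewrite lerD2r lerD2r.
Qed.

Lemma bil_coord A u v : bil A u v = \sum_i \sum_j u 0 i * A i j * v 0 j.
Proof.
rewrite /bil mxE; under eq_bigr => j _ do rewrite !mxE big_distrl /=.
by rewrite exchange_big.
Qed.

Lemma lin_coord b u : lin b u = \sum_j u 0 j * b 0 j.
Proof. by rewrite /lin mxE; apply: eq_bigr => j _; rewrite !mxE. Qed.

Lemma bil_bound (A : 'M[R]_d) (u v : 'rV[R]_d) (al be : R) : 0 <= al -> 0 <= be ->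
  (forall j, `|u 0 j| <= al) -> (forall j, `|v 0 j| <= be) ->
  `|bil A u v| <= (\sum_i \sum_j `|A i j|) * al * be.
Proof.
move=> al0 be0 hu hv; rewrite bil_coord.
apply: le_trans (ler_norm_sum _ _ _) _.
rewrite !mulr_suml; apply: ler_sum => i _.
apply: le_trans (ler_norm_sum _ _ _) _.
rewrite !mulr_suml; apply: ler_sum => j _.
rewrite !normrM (mulrC `|u 0 i|).
apply: ler_pM => //; first by rewrite mulr_ge0.
by apply: ler_wpM2l.
Qed.

Lemma lin_bound (b u : 'rV[R]_d) (al : R) : 0 <= al -> (forall j, `|u 0 j| <= al) ->
  `|lin b u| <= (\sum_j `|b 0 j|) * al.
Proof.
move=> al0 hu; rewrite lin_coord.
apply: le_trans (ler_norm_sum _ _ _) _.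
rewrite mulr_suml; apply: ler_sum => j _.
by rewrite normrM mulrC; apply: ler_pM.
Qed.

Lemma linD b u v : lin b (u + v) = lin b u + lin b v.
Proof. by rewrite /lin mulmxDl mxE. Qed.
Lemma linZ b a u : lin b (a *: u) = a * lin b u.
Proof. by rewrite /lin -scalemxAl mxE. Qed.

Lemma psd_of_int (f : quad R d) : (forall z, Zpt z -> 0 <= qeval f z) ->
  forall x, 0 <= qform (qA f) x.
Proof.
move=> hf x; rewrite leNgt; apply/negP => qneg.
set A := qA f in qneg *; set q := qform A x in qneg.
have qE : q = bil A x x by [].
set S := \sum_i \sum_j `|A i j|.
set T := \sum_j `|qb f 0 j|.
set m := 1 + \sum_j `|x 0 j|.
have S0 : 0 <= S by apply: sumr_ge0 => i _; apply: sumr_ge0.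
have T0 : 0 <= T by apply: sumr_ge0.
have hm : forall j, `|x 0 j| <= m.
  move=> j; rewrite /m (bigD1 j) //= addrCA lerDl.
  by apply: addr_ge0 => //; apply: sumr_ge0.
have m0 : 0 <= m by apply: addr_ge0 => //; apply: sumr_ge0.
set C := 2 * S * m + 2 * T * m + S + 2 * T + `|qc f|.
set N := (Num.truncn (C / - q)).+1.
have NC : C < N%:R * (- q).
  by rewrite -ltr_pdivrMr ?oppr_gt0 //; exact: truncnS_gt.
pose z := \row_j ((Num.floor (N%:R * x 0 j))%:~R : R).
have Zz : Zpt z by move=> j; rewrite mxE intr_int.
set e := z - N%:R *: x.
have he : forall j, `|e 0 j| <= 1.
  move=> j; rewrite !mxE.
  have /andP [h1 h2] := floor_itv (N%:R * x 0 j).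
  rewrite ler_norml; apply/andP; split.
    by move: h2; rewrite intrD; lra.
  by move: h1; lra.
have zE : z = N%:R *: x + e by rewrite /e addrC subrK.
clearbody e.
have := hf z Zz; rewrite zE qevalE bilDl !bilDr !bilZl !bilZr linD linZ -qE.
have := @bil_bound A x e _ _ m0 ler01 hm he; rewrite mulr1 -/S => b1.
have := @bil_bound A e x _ _ ler01 m0 he hm; rewrite mulr1 -/S => b2.
have := @bil_bound A e e _ _ ler01 ler01 he he; rewrite !mulr1 -/S => b3.
have := @lin_bound (qb f) x _ m0 hm; rewrite -/T => b4.
have := @lin_bound (qb f) e _ ler01 he; rewrite mulr1 -/T => b5.
move: b1 b2 b3 b4 b5; rewrite !ler_norml => /andP[b1 b1'] /andP[b2 b2'] /andP[b3 b3'] /andP[b4 b4'] /andP[b5 b5'].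
have N1 : 1 <= N%:R :> R by rewrite ler1n.
have c0 := ler_norm (qc f).
move: NC; rewrite /C => NC.
have N0 : 0 <= N%:R :> R by rewrite ler0n.
have P1 := ler_wpM2l N0 b1'.
have P2 := ler_wpM2l N0 b2'.
have P4 := ler_wpM2l N0 b4'.
have P5 : S + 2 * T + `|qc f| <= N%:R * (S + 2 * T + `|qc f|).
  by rewrite ler_peMl // addr_ge0 // addr_ge0 // mulr_ge0.
have P7 : N%:R * (2 * S * m + 2 * T * m + S + 2 * T + `|qc f|) < N%:R * (N%:R * - q).
  by rewrite ltr_pM2l // (lt_le_trans ltr01 N1).
lra.
Qed.

Definition Ity := ('I_d * 'I_d + ('I_d + 'I_1))%type.
Definition coef (f : quad R d) (k : Ity) : R :=
  match k with
  | inl ij => qA f ij.1 ij.2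
  | inr (inl j) => qb f 0 j
  | inr (inr _) => qc f
  end.

Lemma sum_Ity (V : nmodType) (F : Ity -> V) :
  \sum_k F k = \sum_i \sum_j F (inl (i, j)) + \sum_j F (inr (inl j)) + F (inr (inr ord0)).
Proof.
rewrite big_sumType /= big_sumType /= big_ord1 addrA; congr (_ + _ + _).
by rewrite pair_bigA; apply: eq_bigr => -[].
Qed.

Lemma qeval_coef (f : quad R d) (z : 'rV[R]_d) :
  qeval f z = \sum_k (match k with
                      | inl ij => z 0 ij.1 * z 0 ij.2
                      | inr (inl j) => 2 * z 0 j
                      | inr (inr _) => 1 end) * coef f k.
Proof.
rewrite sum_Ity qevalE bil_coord lin_coord mulr_sumr /= mul1r.
congr (_ + _ + _).
  apply: eq_bigr => i _; apply: eq_bigr => j _; ring.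
by apply: eq_bigr => j _; ring.
Qed.

Lemma sum_ind (V : ringType) (I : finType) (k0 : I) (F : I -> V) :
  \sum_k (k == k0)%:R * F k = F k0.
Proof.
rewrite (bigD1 k0) //= eqxx mul1r big1 ?addr0 // => k /negbTE ->.
by rewrite mul0r.
Qed.

Definition evr (z : 'rV[R]_d) (k : Ity) : rat :=
  match k with
  | inl ij => (Num.floor (z 0 ij.1))%:~R * (Num.floor (z 0 ij.2))%:~R
  | inr (inl j) => 2 * (Num.floor (z 0 j))%:~R
  | inr (inr _) => 1 end.

Lemma evrE (f : quad R d) z : Zpt z -> qeval f z = \sum_k ratr (evr z k) * coef f k.
Proof.
move=> Zz; rewrite qeval_coef.
have hz : forall j, ((Num.floor (z 0 j))%:~R : R) = z 0 j by move=> j; apply: floorK.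
apply: eq_bigr => -[[i j]|[j|j]] _ /=.
- by rewrite rmorphM /= !ratr_int !hz.
- by rewrite rmorphM /= ratr_int hz ratr_nat.
- by rewrite rmorph1.
Qed.

Lemma rational_multiple (p : quad R d) : perfect p ->
  exists (l : R) (Aq : 'M[rat]_d), l != 0 /\ qA p = l *: map_mx ratr Aq.
Proof.
move=> [[[symp Ap0] nonneg] [_ perf]].
have [k Pk] : exists k, coef p k != 0.
  apply: NNPP => H; move/negP: Ap0; apply; apply/eqP/matrixP => i j.
  rewrite mxE; apply: NNPP => H2; apply: H; exists (inl (i, j)); exact/eqP.
have [w [[k1 wk1] hw]] := ratsolF (ex_intro _ k Pk).
pose G := Quad (\matrix_(i, j) ratr (w (inl (i, j))) : 'M[R]_d)
               (\row_j ratr (w (inr (inl j))))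
               (ratr (w (inr (inr ord0)))).
have coefG : forall k, coef G k = ratr (w k).
  by move=> [[i j]|[j|j]] /=; rewrite ?mxE // (ord1 j).
have symw : forall i j, w (inl (i, j)) = w (inl (j, i)).
  move=> i j; apply/eqP; rewrite -subr_eq0; apply/eqP.
  pose a := fun k0 : Ity => ((k0 == inl (i, j))%:R - (k0 == inl (j, i))%:R : rat).
  have H1 : \sum_k0 ratr (a k0) * coef p k0 = 0.
    under eq_bigr => k0 _ do rewrite rmorphB /= !ratr_nat mulrBl.
    rewrite sumrB !sum_ind /=.
    by move: symp => /matrixP/(_ i j); rewrite mxE => ->; rewrite subrr.
  have := hw a H1.
  under eq_bigr => k0 _ do rewrite mulrBl.
  by rewrite sumrB !sum_ind.
have [l Gl] : exists l, G = qscale l p.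
  apply: perf.
    by apply/matrixP => i j; rewrite !mxE symw.
  move=> z [Zz Vz]; rewrite evrE //.
  under eq_bigr => k0 _ do rewrite coefG -rmorphM.
  rewrite -rmorph_sum hw ?rmorph0 //.
  by rewrite -(evrE p Zz).
have coefS : forall k0, coef (qscale l p) k0 = l * coef p k0.
  by move=> [[i j]|[j|j]] /=; rewrite ?mxE.
have l0 : l != 0.
  apply/negP => /eqP l0.
  have : ratr (w k1) != 0 :> R by rewrite fmorph_eq0.
  by rewrite -coefG Gl coefS l0 mul0r eqxx.
exists l^-1, (\matrix_(i, j) w (inl (i, j))); split; first by rewrite invr_eq0.
have -> : map_mx ratr (\matrix_(i, j) w (inl (i, j))) = qA G.
  by apply/matrixP => i j; rewrite !mxE.
by rewrite Gl /= scalerA mulVf // scale1r.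
Qed.
End Q.

Section K.
Variables (R : realType) (d : nat).

Definition sden (r : 'rV[rat]_d) : int := \prod_j denq (r 0 j).
Lemma scale_int (r : 'rV[rat]_d) :
  sden r != 0 /\ forall j, exists m : int, (sden r)%:~R * r 0 j = m%:~R.
Proof.
rewrite /sden; split.
  by rewrite prodf_seq_neq0; apply/allP => j _ /=; rewrite gt_eqF ?denq_gt0.
move=> j; exists ((\prod_(k | k != j) denq (r 0 k)) * numq (r 0 j)).
rewrite (bigD1 j) //= intrM intrM numqE; ring.
Qed.

Lemma kernel_int (Aq : 'M[rat]_d) : exists n (v : 'I_n -> 'rV[R]_d),
  (forall i, Zpt (v i) /\ v i *m map_mx ratr Aq = 0) /\
  forall x, x *m map_mx ratr Aq = 0 -> exists c : 'I_n -> R, x = \sum_(i < n) c i *: v i.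
Proof.
pose K := kermx Aq.
pose s i := sden (row i K).
have hs' : forall i, s i != 0 /\ forall j, exists m : int, (s i)%:~R * row i K 0 j = m%:~R.
  by move=> i; apply: scale_int.
exists d, (fun i => map_mx ratr ((s i)%:~R *: row i K)); split.
  move=> i; split.
    move=> j; have [_ /(_ j) [m hm]] := hs' i.
    move: hm; rewrite mxE => hm.
    by rewrite 3!mxE hm ratr_int intr_int.
  rewrite -map_mxM -scalemxAl -row_mul mulmx_ker.
  by rewrite row0 scaler0 map_mx0.
move=> x /sub_kermxP; rewrite -map_kermx => /submxP [u ->].
exists (fun i => u 0 i / ratr (s i)%:~R).
rewrite mulmx_sum_row; apply: eq_bigr => i _.
rewrite map_mxZ scalerA map_row divfK //.
by rewrite fmorph_eq0 intr_eq0; case: (hs' i).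
Qed.
End K.

Unset Implicit Arguments.

Theorem proposition1 (R : realType) (d : nat) (p : quad R d) :
  perfect p -> edge_form (piPhi p).
Proof.
move=> perfp; have perfp' := perfp.
move: perfp => [[[symp Ap0] nonneg] [[z0 Vz0] perf]].
have psd := psd_of_int nonneg.
have inPhi_p : inPhi (piPhi p).
  split; first exact: symp.
  split; first exact: psd.
  rewrite /piPhi; have [l [Aq [l0 ->]]] := rational_multiple perfp'.
  have [n [v [hv hspan]]] := kernel_int R Aq.
  exists n, v; split.
    move=> i; have [Zv hv0] := hv i; split => //.
    by rewrite -scalemxAr hv0 scaler0.
  move=> x; rewrite -scalemxAr => /eqP; rewrite scaler_eq0 (negbTE l0) /= => /eqP.
  exact: hspan.
have nh : ~ in_hyperplane (Vset p).
  move=> [a [beta [a0 ha]]].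
  pose g := Quad (0 : 'M[R]_d) a (- (2 * beta)).
  have [l E] : exists l, g = qscale l p.
    apply: perf; first by rewrite /is_poly2 /= trmx0.
    move=> x Vx; rewrite /qeval /= mulmx0 mul0mx mxE ha //; ring.
  have := congr1 (@qA R d) E; rewrite /= => /esym/eqP; rewrite scaler_eq0 (negbTE Ap0) orbF => /eqP l0.
  have := congr1 (@qb R d) E; rewrite /= l0 scale0r => a00.
  by move/negP: a0; apply; rewrite a00.
have inPp : inP p by case: perfp'.
split; first exact: inPhi_p.
exists (piPhi p); split; first exact: Ap0.
split; first by split => // P.
move=> psi [[_ [psdpsi _]] same].
have DelP : Del (piPhi p) (conv (Vset p)).
  by exists p; split => //; split => //; split.
have [f [inPf [piPhif [_ hconv]]]] := (same (conv (Vset p))).2 DelP.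
have vanish : forall z, Vset p z -> qeval f z = 0.
  move=> z Vz.
  have cz : conv (Vset p) z.
    exists 1%N, (fun _ => z), (fun _ => 1); split => //; split => //; split.
      by rewrite big_ord1.
    by rewrite big_ord1 scale1r.
  have [n [pt [w [hpt [hw [hw1 ze]]]]]] := (hconv z).1 cz.
  apply/eqP; rewrite eq_le; apply/andP; split; last first.
    by apply: inPf.2; case: Vz.
  rewrite ze; apply: le_trans (jensen _ _ _ _) _ => //.
    by move=> x; rewrite -/(piPhi f) piPhif; exact: psdpsi.
  rewrite big1 // => i _; have [_ ->] := hpt i; exact: mulr0.
have [l fl] := perf f inPf.1.1 vanish.
exists l; rewrite -piPhif fl.
by [].
Qed.
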